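(* Let $\Gamma_n=\{P_1,\ldots,P_k\}$ with $k\ge 2$ and let $Q$ be a minimal witness of $\Gamma_n$. Then $|Q|\le n(k-1)+1$.
   Context: $\Gamma_n$ is a set of $k$ pairwise non-isomorphic (unlabelled) posets each of size $n$. A downset is a downward-closed subset; $D_n(Q)$ is the set of downsets of $Q$ of size $n$ up to isomorphism. $Q$ is a witness of $\Gamma_n$ if $D_n(Q)=\Gamma_n$, and a minimal witness if no proper downset of $Q$ is a witness of $\Gamma_n$. *)

(* Defs.v *)
From mathcomp Require Import all_boot.
Set Implicit Arguments. Unset Strict Implicit. Unset Printing Implicit Defensive.

Definition is_poset (T : finType) (r : rel T) : Prop :=
  reflexive r /\ antisymmetric r /\ transitive r.

Definition is_downset_in (T : finType) (r : rel T) (S D : {set T}) : Prop :=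
  D \subset S /\ forall x y, x \in S -> y \in D -> r x y -> x \in D.

Definition sub_iso (T1 : finType) (r1 : rel T1) (A1 : {set T1})
                   (T2 : finType) (r2 : rel T2) (A2 : {set T2}) : Prop :=
  exists f : T1 -> T2,
    {in A1 &, injective f} /\ f @: A1 = A2 /\
    {in A1 &, forall x y, r2 (f x) (f y) = r1 x y}.

(* Gamma = {P_0, ..., P_(k-1)}, each P_i a poset on 'I_n.
   [witness_on r S n P] : the subposet S of (T, r) is a witness of Gamma,
   i.e. D_n(S) = Gamma (up to isomorphism). *)
Definition witness_on (T : finType) (r : rel T) (S : {set T})
    (n k : nat) (P : 'I_k -> rel 'I_n) : Prop :=
  (forall D : {set T}, is_downset_in r S D -> #|D| = n ->
      exists i : 'I_k, sub_iso r D (P i) setT) /\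
  (forall i : 'I_k, exists D : {set T},
      is_downset_in r S D /\ #|D| = n /\ sub_iso (P i) setT r D).

Definition is_witness (T : finType) (r : rel T) (n k : nat)
    (P : 'I_k -> rel 'I_n) : Prop :=
  witness_on r setT P.

Definition minimal_witness (T : finType) (r : rel T) (n k : nat)
    (P : 'I_k -> rel 'I_n) : Prop :=
  is_witness r P /\
  forall S : {set T}, S \proper setT -> is_downset_in r setT S ->
    ~ witness_on r S P.

(* Main.v *)
Require Import Defs.
From mathcomp Require Import all_boot zify.
Set Implicit Arguments. Unset Strict Implicit. Unset Printing Implicit Defensive.

Lemma exists_min (T : finType) (r : rel T) (HQ : is_poset r) (X : {set T}) (x0 : T) :
  x0 \in X -> exists2 b, b \in X & forall x, x \in X -> r x b -> x = b.
Proof.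
case: HQ => Hrefl [Hanti Htr] Hx0.
case: (arg_minnP (fun b => #|[set y | r y b]|) Hx0) => b Hb Hmin.
exists b => // x Hx Hxb.
apply/eqP; apply/negPn/negP => Hne.
have Hsub : [set y | r y x] \proper [set y | r y b].
  apply/properP; split.
    apply/subsetP => y; rewrite !inE => Hyx; exact: Htr Hyx Hxb.
  exists b; rewrite !inE ?Hrefl //.
  apply/negP => Hbx; move/negP: Hne; apply; apply/eqP; apply: Hanti; by rewrite Hxb Hbx.
have := Hmin x Hx; have := proper_card Hsub; lia.
Qed.

Lemma is_poset_flip (T : finType) (r : rel T) : is_poset r -> is_poset (fun x y => r y x).
Proof.
case=> Hrefl [Hanti Htr]; split; first by move=> x; exact: Hrefl.
split; first by move=> x y /andP [h1 h2]; apply: Hanti; rewrite h1 h2.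
by move=> x y z h1 h2; exact: Htr h2 h1.
Qed.

Lemma exists_max (T : finType) (r : rel T) (HQ : is_poset r) (X : {set T}) (x0 : T) :
  x0 \in X -> exists2 b, b \in X & forall x, x \in X -> r b x -> x = b.
Proof. move=> H; exact: (exists_min (is_poset_flip HQ) H). Qed.

Lemma sub_iso_sym (T1 T2 : finType) (r1 : rel T1) (A1 : {set T1})
  (r2 : rel T2) (A2 : {set T2}) (x0 : T1) :
  sub_iso r1 A1 r2 A2 -> sub_iso r2 A2 r1 A1.
Proof.
case=> f [finj [fim frel]].
pose g y := odflt x0 [pick x in A1 | f x == y].
have Hg : forall y, y \in A2 -> g y \in A1 /\ f (g y) = y.
  move=> y; rewrite -fim => /imsetP [x Hx ->].
  rewrite /g; case: pickP => [x' /andP [Hx' /eqP Hf] | H] /=; first by [].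
  by have := H x; rewrite Hx eqxx.
exists g; split.
  move=> y1 y2 H1 H2 He.
  by rewrite -(Hg _ H1).2 -(Hg _ H2).2 He.
split.
  apply/setP => x; apply/imsetP/idP.
    by case=> y Hy ->; exact: (Hg _ Hy).1.
  move=> Hx; have Hfx : f x \in A2 by rewrite -fim; apply: imset_f.
  exists (f x) => //; have [H1 H2] := Hg _ Hfx; exact: finj.
move=> y1 y2 H1 H2.
have [a1 b1] := Hg _ H1; have [a2 b2] := Hg _ H2.
by rewrite -frel // b1 b2.
Qed.

Lemma step (T : finType) (r : rel T) (HQ : is_poset r) (n : nat) (D D' : {set T}) :
  is_downset_in r setT D -> is_downset_in r setT D' -> #|D| = n -> #|D'| = n ->
  #|D :&: D'| < n.-1 ->
  exists D'' : {set T}, [/\ is_downset_in r setT D'', #|D''| = n,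
     n.-1 <= #|D :&: D''|, #|D :&: D'| < #|D'' :&: D'| & exists b, b \in D''].
Proof.
move=> [_ HD] [_ HD'] cD cD' Hlt.
have Hne1 : exists a0, a0 \in D :\: D'.
  apply/set0Pn; rewrite -card_gt0 cardsD; lia.
have Hne2 : exists b0, b0 \in D' :\: D.
  apply/set0Pn; rewrite -card_gt0 cardsD setIC; lia.
case: Hne1 => a0 Ha0; case: Hne2 => b0 Hb0.
case: (exists_max HQ Ha0) => a Ha amax.
case: (exists_min HQ Hb0) => b Hb bmin.
move: Ha Hb; rewrite !inE => /andP [HaD' HaD] /andP [HbD HbD'].
have Hab : a != b by apply/eqP => E; rewrite E HbD' in HaD'.
exists ((D :\ a) :|: [set b]); split.
- split; first exact: subsetT.
  move=> x y _; rewrite !inE => /orP [/andP [Hya HyD] | /eqP ->] Hxy.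
    have HxD := HD x y (in_setT x) HyD Hxy.
    rewrite HxD andbT; apply/orP; left; apply/negP => /eqP Exa.
    rewrite Exa in Hxy.
    have HyD'n : y \notin D'.
      apply/negP => HyD'; by rewrite (HD' a y (in_setT a) HyD' Hxy) in HaD'.
    have := amax y; rewrite !inE HyD'n HyD => /(_ isT Hxy) Eya.
    by rewrite Eya eqxx in Hya.
  have HxD' := HD' x b (in_setT x) HbD' Hxy.
  case HxD : (x \in D).
    rewrite andbT; apply/orP; left; apply/negP => /eqP Exa.
    by rewrite -Exa HxD' in HaD'.
  have := bmin x; rewrite !inE HxD HxD' => /(_ isT Hxy) ->.
  by rewrite eqxx orbT.
- rewrite cardsU cards1.
  have -> : (D :\ a) :&: [set b] = set0.
    apply/setP => x; rewrite !inE; apply/negP => /andP [/andP [_ HxD] /eqP Exb].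
    by rewrite Exb (negbTE HbD) in HxD.
  rewrite cards0; rewrite (cardsD1 a D) HaD in cD; lia.
- apply: (@leq_trans #|D :\ a|).
    rewrite (cardsD1 a D) HaD in cD; lia.
  apply: subset_leq_card; apply/subsetP => x Hx; rewrite !inE.
  by move: Hx; rewrite !inE => /andP [-> ->].
- apply: (@leq_trans #|b |: (D :&: D')|).
    rewrite cardsU1 !inE (negbTE HbD) /=; lia.
  apply: subset_leq_card; apply/subsetP => x; rewrite !inE.
  case/orP => [/eqP -> | /andP [HxD HxD']]; first by rewrite eqxx orbT HbD'.
  rewrite HxD HxD' !andbT; apply/orP; left; apply/negP => /eqP Exa.
  by rewrite -Exa HxD' in HaD'.
- by exists b; rewrite !inE eqxx orbT.
Qed.

Lemma adj (n k : nat) (P : 'I_k -> rel 'I_n) (T : finType) (r : rel T) (HQ : is_poset r)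
  (H1 : forall D : {set T}, is_downset_in r setT D -> #|D| = n ->
      exists i : 'I_k, sub_iso r D (P i) setT) (m : nat) :
  forall (D D' : {set T}) (i j : 'I_k),
  is_downset_in r setT D -> is_downset_in r setT D' -> #|D| = n -> #|D'| = n ->
  sub_iso (P i) setT r D -> sub_iso (P j) setT r D' -> i != j ->
  n - #|D :&: D'| <= m ->
  exists E E' : {set T}, exists i' j' : 'I_k,
   is_downset_in r setT E /\ is_downset_in r setT E' /\ #|E| = n /\ #|E'| = n /\
       sub_iso (P i') setT r E /\ sub_iso (P j') setT r E' /\ i' != j'
     /\ n.-1 <= #|E :&: E'|.
Proof.
elim: m => [|m IH] D D' i j HD HD' cD cD' Hi Hj Hij Hm.
  exists D, D', i, j; do !split => //.
  have : #|D :&: D'| <= #|D| by apply: subset_leq_card; apply: subsetIl.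
  lia.
case: (leqP n.-1 #|D :&: D'|) => Hs.
  exists D, D', i, j; do !split => //.
have [D'' [HD'' cD'' H1s H2s [b Hb]]] := step HQ HD HD' cD cD' Hs.
have [l Hl] := H1 D'' HD'' cD''.
have Hl' := sub_iso_sym b Hl.
case: (eqVneq l i) => Eli.
  subst l.
  apply: (IH D'' D' i j) => //.
  lia.
exists D, D'', i, l; do !split => //.
by rewrite eq_sym.
Qed.

Theorem mainTheorem11 (n k : nat) (P : 'I_k -> rel 'I_n)
  (HP : forall i, is_poset (P i))
  (Hk : 2 <= k)
  (Hniso : forall i j : 'I_k, i != j -> ~ sub_iso (P i) setT (P j) setT)
  (T : finType) (r : rel T) (HQ : is_poset r)
  (Hmin : minimal_witness r P) :
  #|T| <= n * (k - 1) + 1.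
Proof.
case: Hmin => [[H1 H2] Hmin'].
have [R HR] := fin_all_exists H2.
have k0 : 0 < k by lia.
have k1 : 1 < k by lia.
pose i0 := Ordinal k0; pose i1 := Ordinal k1.
have [HR0 [cR0 iR0]] := HR i0.
have [HR1 [cR1 iR1]] := HR i1.
have Hne : i0 != i1 by [].
have [E [E' [i [j [HE [HE' [cE [cE' [iE [iE' [Hij Hint]]]]]]]]]]] :=
  adj HQ H1 (m := n) HR0 HR1 cR0 cR1 iR0 iR1 Hne (leq_subr _ _).
pose U := \bigcup_(l | (l != i) && (l != j)) R l.
pose S := E :|: E' :|: U.
have HS : is_downset_in r setT S.
  split; first exact: subsetT.
  move=> x y _; rewrite !inE => /orP [/orP [Hy | Hy] | Hy] Hxy.
  - by rewrite (HE.2 x y (in_setT x) Hy Hxy).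
  - by rewrite (HE'.2 x y (in_setT x) Hy Hxy) orbT.
  - move/bigcupP: Hy => [l Hl Hy].
    have [[_ HRl] _] := HR l.
    apply/orP; right; apply/bigcupP; exists l => //.
    exact: HRl x y (in_setT x) Hy Hxy.
have sub_ds : forall D : {set T}, D \subset S -> is_downset_in r setT D -> is_downset_in r S D.
  by move=> D HDS [_ HD]; split => // x y _; exact: HD x y (in_setT x).
have HW : witness_on r S P.
  split.
    move=> D [HDS HD] cD; apply: H1 => //; split; first exact: subsetT.
    move=> x y _ Hy Hxy; apply: (HD x y) => //.
    by apply: (HS.2 x y (in_setT x)) => //; apply: (subsetP HDS).
  move=> l.
  case: (eqVneq l i) => [-> | Hli].
    exists E; split; last by [].
    by apply: sub_ds => //; rewrite /S -setUA subsetUl.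
  case: (eqVneq l j) => [-> | Hlj].
    exists E'; split; last by [].
    by apply: sub_ds => //; rewrite /S -setUA setUCA subsetUl.
  have [HRl [cRl iRl]] := HR l.
  exists (R l); split; last by [].
  apply: sub_ds => //; rewrite /S setUC; apply: subsetU; apply/orP; left.
  by apply: bigcup_sup; rewrite Hli Hlj.
case: (eqVneq S setT) => ES; last first.
  exfalso; apply: (Hmin' S) => //.
  by rewrite properEneq ES subsetT.
rewrite -cardsT -ES.
have cEE : #|E :|: E'| <= n.+1.
  rewrite cardsU; lia.
have cU : #|U| <= \sum_(l | (l != i) && (l != j)) n.
  rewrite /U; apply: (big_ind2 (fun (A : {set T}) m => #|A| <= m)).
  - by rewrite cards0.
  - move=> A1 m1 A2 m2 h1 h2; apply: leq_trans (leq_card_setU _ _) _; lia.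
  - by move=> l _; have [_ [-> _]] := HR l.
have Hsum : \sum_(l < k) n = n + (n + \sum_(l | (l != i) && (l != j)) n).
  by rewrite (bigD1 i) //= (bigD1 j) //= eq_sym.
have Hk' : \sum_(l < k) n = k * n by rewrite sum_nat_const card_ord.
have cS : #|S| <= #|E :|: E'| + #|U| by apply: leq_card_setU.
lia.
Qed.
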